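(* Let $a\geq 1$ and $b\geq 2$ be integers. Let $x\in\Lambda^{a+b}$ have coordinates that are linearly independent over $\mathbb{Q}$, and suppose that $T_{a,b}^k(x)\not\to(0,\ldots,0)$ as $k\to\infty$. Then there exists $k\geq 1$ such that $T_{a,b}^k(x)\in A$.
   Context: For $n\geq 1$ let $\Lambda^n=\{x\in\mathbb{R}^n : 0\leq x_1\leq\cdots\leq x_n\}$. For integers $a,b\geq 1$ the map $T_{a,b}:\Lambda^{a+b}\to\Lambda^{a+b}$ sends $x$ to the vector obtained by arranging $x_1,\ldots,x_a,\,x_{a+1}-x_a,\ldots,x_{a+b}-x_a$ in nondecreasing order. $A=\{x\in\Lambda^{a+b}: x_1+\cdots+x_{a+b}\leq b\,x_{a+b}\}$. *)

(* Defs.v *)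
From HB Require Import structures.
From mathcomp Require Import all_boot all_order all_algebra.
From mathcomp Require Import all_classical all_reals all_analysis.
Set Implicit Arguments. Unset Strict Implicit. Unset Printing Implicit Defensive.
Import Order.TTheory GRing.Theory Num.Theory.
Local Open Scope ring_scope.

(* Coordinates x_1,...,x_n are stored as x`_0,...,x`_(n-1). *)

Definition Lambda {R : realType} (n : nat) (x : seq R) : Prop :=
  size x = n /\ (forall i : nat, (i < n)%N -> 0 <= x`_i) /\ sorted <=%R x.

Definition T {R : realType} (a b : nat) (x : seq R) : seq R :=
  sort <=%R (take a x ++ [seq y - x`_(a.-1) | y <- take b (drop a x)]).

Definition inA {R : realType} (a b : nat) (x : seq R) : Prop :=
  \sum_(i < a + b) x`_i <= b%:R * x`_((a + b).-1).

Definition Q_lin_indep {R : realType} (n : nat) (x : seq R) : Prop :=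
  forall q : 'I_n -> rat,
    \sum_(i < n) ratr (q i) * x`_i = 0 -> forall i, q i = 0.

(* Main.v *)
Require Import Defs.
From HB Require Import structures.
From mathcomp Require Import all_boot all_order all_algebra.
From mathcomp Require Import all_classical all_reals all_analysis.
From mathcomp Require Import lra zify.
Import Order.TTheory GRing.Theory Num.Theory numFieldNormedType.Exports.
Local Open Scope classical_set_scope.
Local Open Scope ring_scope.

Lemma lam_le {R : realType} {n} {y : seq R} : Lambda n y ->
  forall i j, (i <= j)%N -> (j < n)%N -> y`_i <= y`_j.
Proof.
move=> [hs [h0 hsort]] i j hij hj.
apply: (sorted_leq_nth le_trans lexx 0 hsort) => //; rewrite inE hs //.
exact: leq_ltn_trans hij hj.
Qed.

Lemma lam_ge0 {R : realType} {n} {y : seq R} : Lambda n y ->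
  forall i, (i < n)%N -> 0 <= y`_i.
Proof. by move=> [_ [h0 _]]. Qed.

Lemma mem_take_le {R : realType} {n} {y : seq R} {a v} : Lambda n y -> (1 <= a)%N -> (a <= n)%N ->
  v \in take a y -> 0 <= v /\ v <= y`_a.-1.
Proof.
move=> hl ha han /(nthP 0) [i hi <-].
have [hs _] := hl.
rewrite size_take hs in hi.
have hia : (i < a)%N by move: hi; case: ifP => // /negbT; rewrite -leqNgt => h1 h2; apply: leq_trans h2 _.
rewrite nth_take //; split; first by apply: (lam_ge0 hl); exact: leq_trans hia han.
apply: (lam_le hl); first by rewrite -ltnS prednK.
by rewrite prednK // (leq_trans _ han) // ltnW.
Qed.

Lemma mem_drop_le {R : realType} {a b} {y : seq R} {w} : Lambda (a + b) y -> (1 <= a)%N ->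
  w \in take b (drop a y) -> y`_a.-1 <= w /\ w <= y`_(a+b).-1.
Proof.
move=> hl ha /(nthP 0) [j hj <-].
have [hs _] := hl.
rewrite size_take size_drop hs addKn ltnn in hj.
rewrite nth_take // nth_drop; split.
  apply: (lam_le hl); first by rewrite (leq_trans (leq_pred a)) // leq_addr.
  by rewrite ltn_add2l.
apply: (lam_le hl); first by rewrite -ltnS prednK ?ltn_add2l // addn_gt0 ha.
by rewrite prednK ?addn_gt0 ?ha // ltn_add2l.
Qed.

Lemma sum_ord_seq {R : realType} n (y : seq R) : size y = n ->
  \sum_(i < n) y`_i = \sum_(v <- y) v.
Proof. by move=> hs; rewrite (big_nth 0) big_mkord hs. Qed.

Lemma sum_le_const {R : realType} (s : seq R) c : (forall v, v \in s -> v <= c) ->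
  \sum_(v <- s) v <= (size s)%:R * c.
Proof.
elim: s => [|x s IH] h; first by rewrite big_nil mul0r.
rewrite big_cons /= -addn1 natrD mulrDl mul1r addrC lerD //.
  by apply: IH => v hv; apply: h; rewrite inE hv orbT.
by apply: h; rewrite inE eqxx.
Qed.

Lemma T_mem {R : realType} a b (y : seq R) v : v \in T a b y ->
  v \in take a y \/ exists2 w, w \in take b (drop a y) & v = w - y`_a.-1.
Proof.
rewrite /T mem_sort mem_cat => /orP [h|/mapP [w hw ->]]; first by left.
by right; exists w.
Qed.

Lemma size_parts {R : realType} {a b} {y : seq R} : size y = (a + b)%N ->
  size (take a y) = a /\ size (take b (drop a y)) = b.
Proof.
move=> hs; split; apply: size_takel; first by rewrite hs leq_addr.
by rewrite size_drop hs addKn.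
Qed.

Lemma T_size {R : realType} {a b} {y : seq R} : size y = (a + b)%N -> size (T a b y) = (a + b)%N.
Proof.
move=> hs; have [h1 h2] := size_parts hs.
by rewrite /T size_sort size_cat size_map h1 h2.
Qed.

Lemma T_lambda {R : realType} a b (y : seq R) : (1 <= a)%N -> Lambda (a + b) y ->
  Lambda (a + b) (T a b y).
Proof.
move=> ha hl; have [hs _] := hl.
split; first exact: T_size.
split; last by rewrite /T; apply: sort_sorted => u v; exact: le_total.
move=> i hi; have : (T a b y)`_i \in T a b y by rewrite mem_nth // T_size.
case/T_mem => [/(mem_take_le hl ha (leq_addr _ _)) [] //|[w hw ->]].
have [h1 _] := mem_drop_le hl ha hw; by rewrite subr_ge0.
Qed.

Lemma sum_const_seq {R : realType} (s : seq R) c : \sum_(v <- s) c = (size s)%:R * c :> R.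
Proof.
elim: s => [|x s IH]; first by rewrite big_nil mul0r.
by rewrite big_cons IH /= -addn1 natrD mulrDl mul1r addrC.
Qed.

Lemma T_sum {R : realType} a b (y : seq R) : size y = (a + b)%N ->
  \sum_(v <- T a b y) v = \sum_(v <- y) v - b%:R * y`_a.-1.
Proof.
move=> hs; have [h1 h2] := size_parts hs.
rewrite /T (perm_big (take a y ++ [seq w - y`_a.-1 | w <- take b (drop a y)])); last first.
  by rewrite perm_sort perm_refl.
rewrite big_cat /= big_map sumrB sum_const_seq h2 addrA -big_cat /=.
rewrite (take_oversize (s := drop a y)) ?cat_take_drop // size_drop hs addKn //.
Qed.

Lemma T_max {R : realType} a b (y : seq R) : (1 <= a)%N -> Lambda (a + b) y ->
  (T a b y)`_(a + b).-1 <= y`_(a + b).-1.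
Proof.
move=> ha hl; have [hs _] := hl.
have hab : (0 < a + b)%N by rewrite addn_gt0 ha.
have : (T a b y)`_(a + b).-1 \in T a b y by rewrite mem_nth // T_size // prednK.
case/T_mem => [/(mem_take_le hl ha (leq_addr _ _)) [_ h]|[w hw ->]].
  apply: le_trans h _; apply: (lam_le hl); last by rewrite prednK.
  by rewrite -!subn1 leq_sub2r // leq_addr.
have [h1 h2] := mem_drop_le hl ha hw.
apply: le_trans h2; rewrite lerBlDr lerDl; apply: (lam_ge0 hl).
by rewrite -ltnS prednK // ltnS leq_addr.
Qed.

Lemma T_fix {R : realType} a b (y : seq R) : (1 <= a)%N -> Lambda (a + b) y ->
  (0 < b)%N -> 2%:R * y`_a.-1 <= y`_a -> (T a b y)`_a.-1 = y`_a.-1.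
Proof.
move=> ha hl hb h2; have [hs [h0 hso]] := hl.
have [s1 s2] := size_parts hs.
have -> : T a b y = take a y ++ [seq w - y`_a.-1 | w <- take b (drop a y)].
  rewrite /T sorted_sort //; first exact: le_trans.
  rewrite sorted_pairwise; last exact: le_trans.
  rewrite pairwise_cat -!sorted_pairwise; try exact: le_trans.
  apply/and3P; split.
  - apply/allrelP => u v hu /mapP [w hw ->].
    have [_ hu'] := mem_take_le hl ha (leq_addr _ _) hu.
    rewrite (le_trans hu') // lerBrDr.
    have hw' : y`_a <= w.
      move: hw => /(nthP 0) [j hj <-]; rewrite s2 in hj.
      rewrite nth_take // nth_drop; apply: (lam_le hl); first by rewrite leq_addr.
      by rewrite ltn_add2l.
    apply: le_trans hw'; apply: le_trans h2; by rewrite mulr_natl mulr2n.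
  - exact: take_sorted.
  - rewrite sorted_map.
    have : sorted <=%R (take b (drop a y)) by apply: take_sorted; apply: drop_sorted.
    by apply: sub_sorted => u v /=; rewrite lerD2r.
rewrite nth_cat s1 prednK // leqnn nth_take //.
by rewrite -ltnS prednK.
Qed.

Lemma notA_bound {R : realType} a b (y : seq R) : (1 <= a)%N -> (1 <= b)%N ->
  Lambda (a + b) y -> ~ inA a b y ->
  0 < y`_a.-1 /\ y`_(a + b).-1 - a%:R * y`_a.-1 < y`_a.
Proof.
move=> ha hb hl hA; have [hs _] := hl.
have hab : (0 < a + b)%N by rewrite addn_gt0 ha.
have hlt : b%:R * y`_(a + b).-1 < \sum_(v <- y) v.
  by rewrite ltNge; apply/negP => h; apply: hA; rewrite /inA sum_ord_seq.
have ha' : (a < size y)%N by rewrite hs -{1}(addn0 a) ltn_add2l.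
have hsp : \sum_(v <- y) v = \sum_(v <- take a y) v + (y`_a + \sum_(v <- drop a.+1 y) v).
  by rewrite -{1}(cat_take_drop a y) big_cat /= (drop_nth 0 ha') big_cons.
rewrite hsp in hlt.
have [s1 _] := size_parts hs.
have h1 : \sum_(v <- take a y) v <= a%:R * y`_a.-1.
  rewrite -{2}s1; apply: sum_le_const => v hv.
  by have [] := mem_take_le hl ha (leq_addr _ _) hv.
have h2 : \sum_(v <- drop a.+1 y) v <= (b.-1)%:R * y`_(a + b).-1.
  have -> : b.-1 = size (drop a.+1 y) by rewrite size_drop hs subnS addKn.
  apply: sum_le_const => v /(nthP 0) [j hj <-].
  rewrite nth_drop; apply: (lam_le hl).
    rewrite -ltnS prednK //; move: hj; rewrite size_drop hs subnS addKn; lia.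
  by rewrite prednK.
have h3 : y`_a <= y`_(a + b).-1.
  by apply: (lam_le hl); lia.
have hb' : b%:R = (b.-1)%:R + 1 :> R by rewrite natr1 prednK.
rewrite hb' mulrDl mul1r in hlt.
move: h1 h2 h3 hlt.
set A := \sum_(v <- take a y) v; set B := \sum_(v <- drop a.+1 y) v.
set C := a%:R * y`_a.-1; set D := (b.-1)%:R * y`_(a + b).-1.
move=> h1 h2 h3 hlt.
split; last by lra.
have : 0 < C by lra.
by rewrite pmulr_rgt0 // ltr0n.
Qed.

Theorem proposition4p6 (R : realType) (a b : nat) (ha : (1 <= a)%N) (hb : (2 <= b)%N)
  (x : seq R) (hx : Lambda (a + b) x) (hind : Q_lin_indep (a + b) x)
  (hnc : ~ (forall i : nat, (i < a + b)%N ->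
            (fun k : nat => (iter k (T a b) x)`_i) @ \oo --> (0 : R))) :
  exists k : nat, (1 <= k)%N /\ inA a b (iter k (T a b) x).
Proof.
case: (pselect (exists k : nat, (1 <= k)%N /\ inA a b (iter k (T a b) x))) => // hno.
exfalso; apply: hnc.
have hb1 : (1 <= b)%N by apply: leq_trans hb.
have hab : (0 < a + b)%N by rewrite addn_gt0 ha.
set y := fun k => iter k (T a b) x.
have hL : forall k, Lambda (a + b) (y k).
  by elim=> [|k IH] //=; apply: T_lambda.
have hyS : forall k, y k.+1 = T a b (y k) by [].
have hnA : forall k, (1 <= k)%N -> ~ inA a b (y k).
  by move=> k hk hA; apply: hno; exists k.
set M := fun k => (y k)`_(a + b).-1.
set d := fun k => (y k)`_a.-1.
set S := fun k => \sum_(v <- y k) v.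
have hSS : forall k, S k.+1 = S k - b%:R * d k.
  by move=> k; rewrite /S hyS T_sum //; case: (hL k).
have hd0 : forall k, 0 <= d k.
  by move=> k; apply: (lam_ge0 (hL k)); lia.
have hS0 : forall k, 0 <= S k.
  move=> k; rewrite /S -(@sum_ord_seq R (a + b)%N); last by case: (hL k).
  by apply: sumr_ge0 => i _; apply: (lam_ge0 (hL k)).
have hM1 : forall k, M k.+1 <= M k by move=> k; rewrite /M hyS; apply: T_max.
have hMm : forall k n, (k <= n)%N -> M n <= M k.
  move=> k n /subnK <-; elim: (n - k)%N => [|m IH] //.
  by rewrite addSn; apply: le_trans (hM1 _) IH.
have decay : forall c K, 0 < c -> (forall k, (K <= k)%N -> c <= d k) -> False.
  move=> c K hc hd.
  have hS : forall n, S (K + n)%N <= S K - n%:R * c.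
    elim=> [|n IH]; first by rewrite addn0 mul0r subr0.
    rewrite addnS hSS.
    have h1 : c <= d (K + n)%N by apply: hd; rewrite leq_addr.
    have h2 : c <= b%:R * d (K + n)%N.
      apply: le_trans h1 _; rewrite -{1}(mul1r (d _)) ler_wpM2r //.
      by rewrite ler1n.
    rewrite -natr1 mulrDl mul1r; lra.
  set n := Num.Def.archi_bound (S K / c).
  have hn : S K / c < n%:R by apply: archi_boundP; rewrite divr_ge0 // ltW.
  rewrite ltr_pdivrMr // in hn.
  have := hS n; have := hS0 (K + n)%N; lra.
have hMe : forall e, 0 < e -> exists k, M k < e.
  move=> e he; case: (pselect (exists k, M k < e)) => // hne; exfalso.
  have hMge : forall k, e <= M k.
    by move=> k; rewrite leNgt; apply/negP => hk; apply: hne; exists k.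
  set del := e / (a + 2)%:R.
  have hdel : 0 < del by rewrite divr_gt0 // ltr0n addn_gt0 ha.
  have [K [hK1 hKd]] : exists K, (1 <= K)%N /\ d K < del.
    case: (pselect (exists K, (1 <= K)%N /\ d K < del)) => // hnK; exfalso.
    apply: (decay del 1%N hdel) => k hk; rewrite leNgt; apply/negP => hlt.
    by apply: hnK; exists k.
  have hfix : forall n, d (K + n)%N = d K.
    elim=> [|n IH]; first by rewrite addn0.
    rewrite addnS {1}/d hyS (@T_fix R a b _ ha (hL _) hb1) //.
      have [_ hb2] := @notA_bound R a b _ ha hb1 (hL (K + n)%N) (hnA _ (leq_trans hK1 (leq_addr _ _))).
      have hMK := hMge (K + n)%N.
      move: hb2 hMK; rewrite -/(d (K + n)%N) -/(M (K + n)%N) IH.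
      have : (a + 2)%:R * d K < e by rewrite -ltr_pdivlMl ?ltr0n ?addn_gt0 ?ha // mulrC.
      rewrite natrD mulrDl.
      set u := a%:R * d K; set v := (y (K + n)%N)`_a.
      move=> h1 h2 h3; lra.
  have [hdK _] := @notA_bound R a b _ ha hb1 (hL K) (hnA _ hK1).
  apply: (decay (d K) K hdK) => k /subnK <-.
  by rewrite addnC hfix.
move=> i hi; apply/cvgrPdist_lt => e he.
have [k hk] := hMe e he.
exists k => // n /= hkn.
rewrite sub0r normrN ger0_norm; last by apply: (lam_ge0 (hL n)).
apply: le_lt_trans hk; apply: le_trans (hMm _ _ hkn).
by apply: (lam_le (hL n)); lia.
Qed.
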